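(* Let $\mathcal B_{\mathcal E}$ be the set of partitions $\beta_1+\cdots+\beta_n$ ($0<\beta_1\le\cdots\le\beta_n$) with $\beta_1\in\{2,3\}$ and, for each $2\le i\le n$: if $\beta_i$ is odd then $3\le\beta_i-\beta_{i-1}\le4$, and if $\beta_i$ is even then $0\le\beta_i-\beta_{i-1}\le1$. Let $b_{\mathcal E}(n)=\sum q^{|\beta|}$ over $\beta\in\mathcal B_{\mathcal E}$ with exactly $n$ parts ($b_{\mathcal E}(0)=1$). Then $$\sum_{n\ge0}\frac{b_{\mathcal E}(n)}{(q^2;q^2)_n}=1+\frac{q^2+q^3}{1-q^2}+\sum_{n\ge2}\frac{(-q^3;q^4)_{n-1}\,q^{2n}(1+q^{2n-1})}{(q^2;q^2)_n}.$$
   Context: $(a;q)_n=\prod_{j=0}^{n-1}(1-aq^j)$; $|\beta|$ is the sum of parts. *)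

(* Defs.v *)
From Stdlib Require Import Reals List Arith Lra.
From Coquelicot Require Import Coquelicot.
Import ListNotations.
Open Scope R_scope.

Fixpoint qpoch (a q : R) (n : nat) : R :=
  match n with
  | O => 1
  | S m => qpoch a q m * (1 - a * q ^ m)
  end.

Definition step_ok (prev x : nat) : bool :=
  if Nat.odd x then (Nat.leb (prev + 3) x && Nat.leb x (prev + 4))%bool
  else (Nat.leb prev x && Nat.leb x (prev + 1))%bool.

Fixpoint chain_ok (prev : nat) (s : list nat) : bool :=
  match s with
  | [] => true
  | x :: r => (step_ok prev x && chain_ok x r)%bool
  end.

(* A partition beta_1 <= ... <= beta_n is encoded as the list
   [beta_1; ...; beta_n] (weakly increasing order).  The empty list is the
   empty partition, giving b_E(0) = 1. *)
Definition inBE (s : list nat) : bool :=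
  match s with
  | [] => true
  | b1 :: r => ((Nat.eqb b1 2 || Nat.eqb b1 3) && chain_ok b1 r)%bool
  end.

Fixpoint lists_bounded (n B : nat) : list (list nat) :=
  match n with
  | O => [[]]
  | S m => flat_map (fun x => map (cons x) (lists_bounded m B)) (seq 0 (S B))
  end.

Definition list_sum (s : list nat) : nat := fold_right Nat.add 0%nat s.

(* Every such beta has all parts <= 3 + 4(n-1) <= 4n, so enumerating lists
   with entries bounded by 4n covers exactly the (finite) set. *)
Definition bE (n : nat) (q : R) : R :=
  fold_right Rplus 0
    (map (fun s => q ^ list_sum s) (filter inBE (lists_bounded n (4 * n)))).

Definition lhs_term (q : R) (n : nat) : R :=
  bE n q / qpoch (q ^ 2) (q ^ 2) n.

Definition rhs_term (q : R) (k : nat) : R :=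
  let n := (k + 2)%nat in
  qpoch (- q ^ 3) (q ^ 4) (n - 1) * q ^ (2 * n) * (1 + q ^ (2 * n - 1))
    / qpoch (q ^ 2) (q ^ 2) n.

(* Main.v *)
Require Import Defs.
From Stdlib Require Import Reals List Arith Lra Lia.
From Coquelicot Require Import Coquelicot.
Import ListNotations.
Open Scope R_scope.

Definition sumR (l : list R) : R := fold_right Rplus 0 l.

Lemma sumR_filter {A} (f : A -> R) (p : A -> bool) (l : list A) :
  sumR (map f (filter p l)) = sumR (map (fun x => if p x then f x else 0) l).
Proof. induction l as [|a l IH]; simpl; auto. destruct (p a); simpl; rewrite IH; ring. Qed.

Lemma sumR_app l1 l2 : sumR (l1 ++ l2) = sumR l1 + sumR l2.
Proof. induction l1; simpl; [ring| rewrite IHl1; ring]. Qed.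

Lemma sumR_flat_map {A B} (h : B -> R) (g : A -> list B) (l : list A) :
  sumR (map h (flat_map g l)) = sumR (map (fun x => sumR (map h (g x))) l).
Proof. induction l; simpl; auto. rewrite map_app, sumR_app, IHl. auto. Qed.

Lemma sumR_ext {A} (f g : A -> R) l : (forall x, f x = g x) -> sumR (map f l) = sumR (map g l).
Proof. intros H; induction l; simpl; auto. rewrite H, IHl; auto. Qed.

Lemma sumR_scal {A} (c : R) (f : A -> R) l : sumR (map (fun x => c * f x) l) = c * sumR (map f l).
Proof. induction l; simpl; [ring| rewrite IHl; ring]. Qed.

Lemma sumR_plus {A} (f g : A -> R) l : sumR (map (fun x => f x + g x) l) = sumR (map f l) + sumR (map g l).
Proof. induction l; simpl; [ring| rewrite IHl; ring]. Qed.

Lemma sumR_zeros {A} (l : list A) : sumR (map (fun _ => 0) l) = 0.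
Proof. induction l; simpl; auto. rewrite IHl; ring. Qed.

Lemma sumR_zero (F : nat -> R) a l : ~ In a l -> sumR (map (fun x => if Nat.eqb x a then F x else 0) l) = 0.
Proof. induction l; simpl; auto. intros H. destruct (Nat.eqb_spec a0 a). subst; tauto. rewrite IHl; [ring|tauto]. Qed.

Lemma sumR_single (F : nat -> R) a l : NoDup l -> In a l -> sumR (map (fun x => if Nat.eqb x a then F x else 0) l) = F a.
Proof. induction l; simpl. intros _ []. intros Hn Hi. inversion Hn; subst.
  destruct (Nat.eqb_spec a0 a). subst. rewrite sumR_zero; auto; ring.
  destruct Hi as [->|Hi]; [tauto|]. rewrite IHl; auto; ring. Qed.

Lemma sumR_two (F : nat -> R) a b N : a <> b -> (a < N)%nat -> (b < N)%nat ->
  sumR (map (fun x => if (Nat.eqb x a || Nat.eqb x b)%bool then F x else 0) (seq 0 N)) = F a + F b.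
Proof. intros Hab Ha Hb.
  rewrite (sumR_ext _ (fun x => (if Nat.eqb x a then F x else 0) + (if Nat.eqb x b then F x else 0))).
  rewrite sumR_plus, !sumR_single; auto; try apply seq_NoDup; try (apply in_seq; lia).
  intros x. destruct (Nat.eqb_spec x a), (Nat.eqb_spec x b); simpl; try ring. lia. Qed.

Lemma odd_char x : (Nat.odd x = true /\ exists k, x = 2*k+1)%nat \/ (Nat.odd x = false /\ exists k, x = 2*k)%nat.
Proof. destruct (Nat.Even_or_Odd x) as [H|H].
  right. split; auto. rewrite <- Nat.negb_even. apply Nat.even_spec in H. rewrite H; auto.
  left. split; auto. apply Nat.odd_spec; auto. Qed.

Lemma step_even prev : Nat.odd prev = false -> forall x, step_ok prev x = (Nat.eqb x prev || Nat.eqb x (prev+3))%bool.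
Proof. intros Hp x. apply Bool.eq_true_iff_eq. rewrite Bool.orb_true_iff, !Nat.eqb_eq. unfold step_ok.
  destruct (odd_char prev) as [[H1 [k Hk]]|[H1 [k Hk]]]; [congruence|].
  destruct (odd_char x) as [[H2 [j Hj]]|[H2 [j Hj]]]; rewrite H2; rewrite Bool.andb_true_iff, !Nat.leb_le; lia. Qed.

Lemma step_odd prev : Nat.odd prev = true -> forall x, step_ok prev x = (Nat.eqb x (prev+1) || Nat.eqb x (prev+4))%bool.
Proof. intros Hp x. apply Bool.eq_true_iff_eq. rewrite Bool.orb_true_iff, !Nat.eqb_eq. unfold step_ok.
  destruct (odd_char prev) as [[H1 [k Hk]]|[H1 [k Hk]]]; [|congruence].
  destruct (odd_char x) as [[H2 [j Hj]]|[H2 [j Hj]]]; rewrite H2; rewrite Bool.andb_true_iff, !Nat.leb_le; lia. Qed.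

Section Q.
Variable q : R.

Definition P (m : nat) := qpoch (- q ^ 3) (q ^ 4) m.

Lemma P_S m : P (S m) = P m * (1 + q^3 * q^(4*m)).
Proof. unfold P. change (qpoch (- q ^ 3) (q ^ 4) (S m)) with (qpoch (- q ^ 3) (q ^ 4) m * (1 - - q^3 * (q^4)^m)).
  rewrite <- pow_mult. ring. Qed.

Definition G (m B prev : nat) : R :=
  sumR (map (fun s => if chain_ok prev s then q ^ Defs.list_sum s else 0) (lists_bounded m B)).

Lemma G_S m B prev : G (S m) B prev =
  sumR (map (fun x => if step_ok prev x then q ^ x * G m B x else 0) (seq 0 (S B))).
Proof. unfold G. change (lists_bounded (S m) B) with (flat_map (fun x => map (cons x) (lists_bounded m B)) (seq 0 (S B))). rewrite sumR_flat_map. apply sumR_ext. intros x.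
  rewrite map_map. simpl. destruct (step_ok prev x); simpl.
  rewrite <- sumR_scal. apply sumR_ext. intros s. destruct (chain_ok x s); [rewrite pow_add|]; ring.
  induction (lists_bounded m B); simpl; auto. rewrite IHl; ring. Qed.

Definition par (n : nat) : nat := if Nat.odd n then 1%nat else 0%nat.

Lemma G_closed m : forall B prev, (prev + 4*m <= B)%nat ->
  G m B prev = q ^ (m * (prev + par prev)) * P m.
Proof. induction m as [|m IH]; intros B prev HB.
  - unfold G, P. simpl. ring.
  - rewrite G_S. unfold par. destruct (Nat.odd prev) eqn:Ho.
    + rewrite (sumR_ext _ (fun x => if (Nat.eqb x (prev+1) || Nat.eqb x (prev+4))%bool then q ^ x * G m B x else 0)).
      2:{ intros x. rewrite step_odd; auto. }
      rewrite sumR_two by lia. rewrite !IH by lia. unfold par.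
      rewrite !Nat.odd_add, Ho. change (Nat.odd 3) with true; change (Nat.odd 1) with true; change (Nat.odd 4) with false; simpl xorb. rewrite P_S.
      replace (q ^ (prev + 1) * (q ^ (m * (prev + 1 + 0)) * P m))
        with (q ^ (S m * (prev + 1)) * P m)
        by (rewrite <- ?Rmult_assoc, <- !pow_add; f_equal; f_equal; nia).
      replace (q ^ (prev + 4) * (q ^ (m * (prev + 4 + 1)) * P m))
        with (q ^ (S m * (prev + 1)) * (q^3 * q^(4*m)) * P m)
        by (rewrite <- ?Rmult_assoc, <- !pow_add;  f_equal; f_equal; nia).
      ring.
    + rewrite (sumR_ext _ (fun x => if (Nat.eqb x prev || Nat.eqb x (prev+3))%bool then q ^ x * G m B x else 0)).
      2:{ intros x. rewrite step_even; auto. }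
      rewrite sumR_two by lia. rewrite !IH by lia. unfold par.
      rewrite !Nat.odd_add, Ho. change (Nat.odd 3) with true; change (Nat.odd 1) with true; change (Nat.odd 4) with false; simpl xorb. rewrite P_S.
      replace (q ^ prev * (q ^ (m * (prev + 0)) * P m))
        with (q ^ (S m * (prev + 0)) * P m)
        by (rewrite <- ?Rmult_assoc, <- !pow_add; f_equal; f_equal; nia).
      replace (q ^ (prev + 3) * (q ^ (m * (prev + 3 + 1)) * P m))
        with (q ^ (S m * (prev + 0)) * (q^3 * q^(4*m)) * P m)
        by (rewrite <- ?Rmult_assoc, <- !pow_add; f_equal; f_equal; nia).
      ring.
Qed.

Lemma bE_0 : bE 0 q = 1.
Proof. unfold bE. simpl. ring. Qed.

Lemma bE_S m : bE (S m) q = P m * (q ^ (2 * S m) + q ^ (4 * m + 3)).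
Proof. unfold bE. change (fold_right Rplus 0) with sumR. rewrite sumR_filter.
  change (lists_bounded (S m) (4 * S m)) with (flat_map (fun x => map (cons x) (lists_bounded m (4 * S m))) (seq 0 (S (4 * S m)))). rewrite sumR_flat_map.
  rewrite (sumR_ext _ (fun x => if (Nat.eqb x 2 || Nat.eqb x 3)%bool then q ^ x * G m (4 * S m) x else 0)).
  - rewrite sumR_two by lia. rewrite !G_closed by lia. unfold par. change (Nat.odd 3) with true; change (Nat.odd 2) with false; cbv iota.
    replace (q ^ 2 * (q ^ (m * (2 + 0)) * P m)) with (q ^ (2 * S m) * P m)
      by (rewrite <- ?Rmult_assoc, <- !pow_add; f_equal; f_equal; nia).
    replace (q ^ 3 * (q ^ (m * (3 + 1)) * P m)) with (q ^ (4 * m + 3) * P m)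
      by (rewrite <- ?Rmult_assoc, <- !pow_add; f_equal; f_equal; nia).
    ring.
  - intros x. rewrite map_map. unfold G. simpl inBE.
    destruct (Nat.eqb x 2 || Nat.eqb x 3)%bool; simpl.
    + rewrite <- sumR_scal. apply sumR_ext. intros s. destruct (chain_ok x s); [rewrite pow_add|]; ring.
    + apply sumR_zeros.
Qed.
End Q.

Lemma pow_le1 x n : 0 <= x <= 1 -> x ^ n <= 1.
Proof. intros H. rewrite <- (pow1 n). apply pow_incr. lra. Qed.

Lemma pow_decr x m n : 0 <= x <= 1 -> (m <= n)%nat -> x ^ n <= x ^ m.
Proof. intros H Hmn. replace n with (m + (n - m))%nat by lia. rewrite pow_add.
  assert (0 <= x ^ m) by (apply pow_le; lra). assert (x ^ (n - m) <= 1) by (apply pow_le1; lra).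
  assert (0 <= x ^ (n-m)) by (apply pow_le; lra). nra. Qed.

Section A.
Variable q : R.
Hypothesis hq : Rabs q < 1.

Definition Q n := qpoch (q ^ 2) (q ^ 2) n.
Definition PA n := qpoch (- Rabs q ^ 3) (Rabs q ^ 4) n.
Definition s := (1 + q ^ 2) / 2.

Lemma q2 : 0 <= q ^ 2 < 1.
Proof. rewrite <- pow2_abs. pose proof (Rabs_pos q). split; [apply pow_le; auto|nra]. Qed.

Lemma Q_S n : Q (S n) = Q n * (1 - q ^ 2 * (q ^ 2) ^ n).
Proof. reflexivity. Qed.

Lemma fac_pos n : 0 < 1 - q ^ 2 * (q ^ 2) ^ n.
Proof. pose proof q2. assert ((q^2)^n <= 1) by (apply pow_le1; lra).
  assert (0 <= (q^2)^n) by (apply pow_le; lra). nra. Qed.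

Lemma Q_pos n : 0 < Q n.
Proof. induction n. unfold Q; simpl; lra. rewrite Q_S. pose proof (fac_pos n). nra. Qed.

Lemma PA_S n : PA (S n) = PA n * (1 + Rabs q ^ 3 * (Rabs q ^ 4) ^ n).
Proof. unfold PA. change (qpoch (- Rabs q ^ 3) (Rabs q ^ 4) (S n)) with (qpoch (- Rabs q ^ 3) (Rabs q ^ 4) n * (1 - - Rabs q ^ 3 * (Rabs q ^ 4) ^ n)). ring. Qed.

Lemma aq : 0 <= Rabs q <= 1.
Proof. pose proof (Rabs_pos q). lra. Qed.

Lemma PA_ge1 n : 1 <= PA n.
Proof. induction n. unfold PA; simpl; lra. rewrite PA_S. pose proof aq.
  assert (0 <= Rabs q ^ 3 * (Rabs q ^ 4) ^ n) by (apply Rmult_le_pos; apply pow_le; try apply pow_le; lra). nra. Qed.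

Lemma PA_mono n : PA n <= PA (S n).
Proof. rewrite PA_S. pose proof (PA_ge1 n). pose proof aq.
  assert (0 <= Rabs q ^ 3 * (Rabs q ^ 4) ^ n) by (apply Rmult_le_pos; apply pow_le; try apply pow_le; lra). nra. Qed.

Lemma P_le n : Rabs (P q n) <= PA n.
Proof. induction n. unfold P, PA; simpl. rewrite Rabs_R1; lra.
  rewrite P_S, PA_S, Rabs_mult. pose proof aq.
  assert (Rabs (1 + q ^ 3 * q ^ (4 * n)) <= 1 + Rabs q ^ 3 * (Rabs q ^ 4) ^ n).
  { eapply Rle_trans. apply Rabs_triang. rewrite Rabs_R1, Rabs_mult, <- !RPow_abs, pow_mult. lra. }
  apply Rmult_le_compat; auto; apply Rabs_pos. Qed.

Lemma lhs0 : lhs_term q 0 = 1.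
Proof. unfold lhs_term. rewrite bE_0. simpl. field. Qed.

Lemma lhsS m : lhs_term q (S m) = P q m * (q ^ (2 * S m) + q ^ (4 * m + 3)) / Q (S m).
Proof. unfold lhs_term. rewrite bE_S. reflexivity. Qed.

Definition M n := 2 * PA n * s ^ n / Q n.

Lemma bound n : Rabs (lhs_term q n) <= M n.
Proof. unfold M. pose proof (Q_pos n). pose proof q2 as Hq2. pose proof (PA_ge1 n).
  assert (Hs : 0 <= s ^ n) by (apply pow_le; unfold s; lra).
  destruct n as [|m].
  - rewrite lhs0. unfold Q, PA; simpl. rewrite Rabs_R1. lra.
  - rewrite lhsS, Rabs_div by lra. rewrite (Rabs_right (Q _)) by lra.
    apply Rmult_le_compat_r. left; apply Rinv_0_lt_compat; auto.
    rewrite Rabs_mult.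
    assert (Rabs (q ^ (2 * S m) + q ^ (4 * m + 3)) <= 2 * s ^ S m).
    { eapply Rle_trans. apply Rabs_triang. rewrite <- !RPow_abs.
      assert (Rabs q ^ (4 * m + 3) <= Rabs q ^ (2 * S m)) by (apply pow_decr; [apply aq|lia]).
      assert (Rabs q ^ (2 * S m) <= s ^ S m).
      { rewrite pow_mult, pow2_abs. apply pow_incr. unfold s; lra. }
      lra. }
    pose proof (P_le m). pose proof (PA_mono m).
    assert (0 <= Rabs (P q m)) by apply Rabs_pos.
    assert (0 <= Rabs (q ^ (2 * S m) + q ^ (4 * m + 3))) by apply Rabs_pos.
    replace (2 * PA (S m) * s ^ S m) with (PA (S m) * (2 * s ^ S m)) by ring.
    apply Rmult_le_compat; auto. lra. Qed.

Lemma M_pos n : 0 < M n.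
Proof. unfold M. pose proof (Q_pos n). pose proof (PA_ge1 n). pose proof q2.
  assert (0 < s ^ n) by (apply pow_lt; unfold s; lra).
  apply Rdiv_lt_0_compat; auto. nra. Qed.

Lemma ex_M : ex_series M.
Proof.
  assert (H : ex_series (fun n => Rabs (M n))).
  { apply (ex_series_DAlembert M s).
    - pose proof q2. unfold s; lra.
    - intros n. pose proof (M_pos n). lra.
    - pose proof aq as Ha. pose proof q2 as Hq2.
      assert (L : is_lim_seq (fun n => s * (1 + Rabs q ^ 3 * (Rabs q ^ 4) ^ n) / (1 - q ^ 2 * (q ^ 2) ^ n))
                   (s * (1 + Rabs q ^ 3 * 0) / (1 - q ^ 2 * 0))).
      { apply is_lim_seq_div'.
        - apply is_lim_seq_mult'. apply is_lim_seq_const. apply is_lim_seq_plus'. apply is_lim_seq_const.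
          apply is_lim_seq_mult'. apply is_lim_seq_const. apply is_lim_seq_geom.
          rewrite Rabs_right by (apply Rle_ge, pow_le; lra).
          assert (Rabs q ^ 4 <= Rabs q ^ 1) by (apply pow_decr; [auto|lia]). simpl in *. lra.
        - apply is_lim_seq_minus'. apply is_lim_seq_const.
          apply is_lim_seq_mult'. apply is_lim_seq_const. apply is_lim_seq_geom.
          rewrite Rabs_right; lra.
        - lra. }
      replace (s * (1 + Rabs q ^ 3 * 0) / (1 - q ^ 2 * 0)) with s in L by (field).
      eapply is_lim_seq_ext; [|exact L]. intros n.
      rewrite (Rabs_right (M (S n) / M n)).
      + unfold M. rewrite PA_S. change (Q (S n)) with (Q n * (1 - q ^ 2 * (q ^ 2) ^ n)).
        pose proof (Q_pos n). pose proof (fac_pos n). pose proof (PA_ge1 n).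
        assert (0 < s ^ n) by (apply pow_lt; unfold s; lra).
        change (s ^ S n) with (s * s ^ n). field. repeat split; lra.
      + apply Rle_ge. pose proof (M_pos n). pose proof (M_pos (S n)).
        left. apply Rdiv_lt_0_compat; auto. }
  eapply ex_series_ext; [|exact H]. intros n. apply Rabs_right. left. apply M_pos.
Qed.

Lemma ex_lhs : ex_series (lhs_term q).
Proof. apply (@ex_series_le R_AbsRing R_CompleteNormedModule _ M). intros n. apply bound. apply ex_M. Qed.

Lemma rhs_eq k : rhs_term q k = lhs_term q (2 + k).
Proof. unfold rhs_term. simpl (2 + k)%nat. rewrite lhsS.
  replace (k + 2)%nat with (S (S k)) by lia. replace (S (S k) - 1)%nat with (S k) by lia.
  fold (P q (S k)). fold (Q (S (S k))).
  replace (2 * S (S k) - 1)%nat with (S (2 * S k)) by lia.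
  replace (4 * S k + 3)%nat with (2 * S (S k) + S (2 * S k))%nat by lia.
  rewrite (pow_add q (2 * S (S k))). unfold Rdiv. ring. Qed.

End A.

Theorem theorem16 (q : R) (hq : Rabs q < 1) :
  ex_series (lhs_term q) /\ ex_series (rhs_term q) /\
  Series (lhs_term q) =
    1 + (q ^ 2 + q ^ 3) / (1 - q ^ 2) + Series (rhs_term q).
Proof.
  pose proof (ex_lhs q hq) as E.
  assert (E2 : ex_series (rhs_term q)).
  { apply (ex_series_ext (fun k => lhs_term q (2 + k))).
    intros k; symmetry; apply rhs_eq. apply ex_series_incr_n. exact E. }
  split; [exact E|split; [exact E2|]].
  rewrite (Series_incr_n (lhs_term q) 2) by (auto; lia).
  rewrite (Series_ext (fun k => lhs_term q (2 + k)) (rhs_term q)) by (intros k; symmetry; apply rhs_eq).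
  simpl sum_f_R0. rewrite lhs0, lhsS. unfold P, Q. simpl qpoch.
  pose proof (q2 q hq). f_equal. change (q^(2*1)) with (q^2). change (q^(4*0+3)) with (q^3). field. simpl in H. intro; nra.
Qed.
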